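(* A function $F\in\Delta_+$ is a Boolean max-stable law if and only if there exist $\lambda>0$ and $\alpha>0$ such that $F(t)=(1+\lambda t^{-\alpha})^{-1}$ for all $t>0$ (and $F(0)=0$).
   Context: $\Delta_+$ is the set of functions $F:[0,\infty)\to[0,1]$ that are nondecreasing, right continuous and satisfy $\lim_{t\to\infty}F(t)=1$. Define $\sqcap$ on $[0,1]$ by $(x\sqcap y)^{-1}-1=(x^{-1}-1)+(y^{-1}-1)$ (conventions $0^{-1}=+\infty$, $(+\infty)^{-1}=0$), and the Boolean max-convolution of $F,G\in\Delta_+$ by $(F\boxed{\vee}G)(t)=F(t)\sqcap G(t)$; $G^{\boxed{\vee}n}$ denotes the $n$-fold Boolean max-convolution of $G$ with itself. $F\in\Delta_+$ is Boolean max-stable if there exist $G\in\Delta_+$ and constants $a_n>0$ ($n\in\mathbb{N}$) with $G^{\boxed{\vee}n}(a_nt)\to F(t)$ as $n\to\infty$ for all $t\ge0$. *)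

(* Defs.v *)
From Stdlib Require Import Reals Lra.
Open Scope R_scope.

(* Delta_+ : distribution functions on [0,oo); values on t < 0 are irrelevant. *)
Definition in_Delta_plus (F : R -> R) : Prop :=
  (forall t, 0 <= t -> 0 <= F t <= 1) /\
  (forall s t, 0 <= s -> s <= t -> F s <= F t) /\
  (forall t, 0 <= t -> forall eps, 0 < eps ->
      exists delta, 0 < delta /\
        forall s, t <= s < t + delta -> Rabs (F s - F t) < eps) /\
  (forall eps, 0 < eps -> exists M, forall t, M <= t -> Rabs (F t - 1) < eps).

(* x ⊓ y defined by (x⊓y)^-1 - 1 = (x^-1 - 1) + (y^-1 - 1), with 0^-1 = +oo,
   (+oo)^-1 = 0.  For x,y in (0,1] this unfolds to xy/(x+y-xy); if x = 0 or
   y = 0 the right-hand side is +oo, hence x⊓y = 0. *)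
Definition bmeet (x y : R) : R :=
  if Req_EM_T x 0 then 0
  else if Req_EM_T y 0 then 0
  else / ((/ x - 1) + (/ y - 1) + 1).

Definition bmaxconv (F G : R -> R) : R -> R := fun t => bmeet (F t) (G t).

(* n-fold Boolean max-convolution; G^{⊔0} := 1 (the neutral element of ⊓),
   G^{⊔(n+1)} := G^{⊔n} ⊔ G, so G^{⊔1} = G. *)
Fixpoint bmaxpow (n : nat) (G : R -> R) : R -> R :=
  match n with
  | O => fun _ => 1
  | S m => bmaxconv (bmaxpow m G) G
  end.

Definition boolean_max_stable (F : R -> R) : Prop :=
  exists (G : R -> R) (a : nat -> R),
    in_Delta_plus G /\ (forall n, 0 < a n) /\
    forall t, 0 <= t -> Un_cv (fun n => bmaxpow n G (a n * t)) (F t).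

Definition degenerate (F : R -> R) : Prop :=
  exists c, 0 <= c /\ forall t, 0 <= t -> F t = (if Rlt_dec t c then 0 else 1).

(* Main.v *)
Require Import Defs.
From Stdlib Require Import Reals.
From Stdlib Require Import Lra Lia Psatz Classical ClassicalEpsilon ZArith.
Open Scope R_scope.


Definition Q (rho y : R) : R := y / (rho * (1 - y) + y).

Lemma Qden_pos rho y : 0 < rho -> 0 <= y <= 1 -> 0 < rho * (1 - y) + y.
Proof.
  intros Hr Hy. destruct (Rle_lt_or_eq_dec 0 y (proj1 Hy)) as [H|H].
  - assert (0 <= rho * (1 - y)) by (apply Rmult_le_pos; lra). lra.
  - subst. lra.
Qed.

Lemma Q_range rho y : 0 < rho -> 0 <= y <= 1 -> 0 <= Q rho y <= 1.
Proof.
  intros Hr Hy. pose proof (Qden_pos rho y Hr Hy). unfold Q. split.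
  - apply Rmult_le_pos; [lra | left; apply Rinv_0_lt_compat; lra].
  - apply (Rmult_le_reg_r (rho * (1 - y) + y)); auto.
    unfold Rdiv. rewrite Rmult_assoc, Rinv_l by lra.
    assert (0 <= rho * (1 - y)) by (apply Rmult_le_pos; lra). lra.
Qed.

Lemma Q_pos rho y : 0 < rho -> 0 < y <= 1 -> 0 < Q rho y.
Proof.
  intros Hr Hy. pose proof (Qden_pos rho y Hr ltac:(lra)). unfold Q.
  apply Rdiv_lt_0_compat; lra.
Qed.

Lemma Q_lt1 rho y : 0 < rho -> 0 <= y < 1 -> Q rho y < 1.
Proof.
  intros Hr Hy. pose proof (Qden_pos rho y Hr ltac:(lra)). unfold Q.
  apply (Rmult_lt_reg_r (rho * (1 - y) + y)); auto.
  unfold Rdiv. rewrite Rmult_assoc, Rinv_l by lra.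
  assert (0 < rho * (1 - y)) by (apply Rmult_lt_0_compat; lra). lra.
Qed.

Lemma Q0 rho : Q rho 0 = 0.
Proof. unfold Q. unfold Rdiv. ring. Qed.

Lemma Q1 y : 0 <= y <= 1 -> Q 1 y = y.
Proof. intros. unfold Q. replace (1 * (1 - y) + y) with 1 by ring. field. Qed.

Lemma Q_comp rho sig y : 0 < rho -> 0 < sig -> 0 <= y <= 1 ->
  Q rho (Q sig y) = Q (rho * sig) y.
Proof.
  intros Hr Hs Hy. pose proof (Qden_pos sig y Hs Hy) as D1.
  pose proof (Qden_pos (rho*sig) y ltac:(nra) Hy) as D2.
  unfold Q at 2.
  assert (E : rho * (1 - y / (sig * (1 - y) + y)) + y / (sig * (1 - y) + y)
      = (rho * sig * (1 - y) + y) / (sig * (1 - y) + y)) by (field; lra).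
  unfold Q at 1. rewrite E. unfold Q. field. split; lra.
Qed.

Lemma Q_mono rho y1 y2 : 0 < rho -> 0 <= y1 -> y1 <= y2 -> y2 <= 1 -> Q rho y1 <= Q rho y2.
Proof.
  intros Hr H1 H12 H2.
  pose proof (Qden_pos rho y1 Hr ltac:(lra)) as D1.
  pose proof (Qden_pos rho y2 Hr ltac:(lra)) as D2.
  assert (E : Q rho y2 - Q rho y1 = rho * (y2 - y1) / ((rho * (1 - y1) + y1) * (rho * (1 - y2) + y2)))
    by (unfold Q; field; lra).
  assert (0 <= rho * (y2 - y1) / ((rho * (1 - y1) + y1) * (rho * (1 - y2) + y2))).
  { apply Rmult_le_pos. apply Rmult_le_pos; lra. left; apply Rinv_0_lt_compat; nra. }
  lra.
Qed.

Lemma Q_anti rho1 rho2 y : 0 < rho1 -> rho1 < rho2 -> 0 < y < 1 -> Q rho2 y < Q rho1 y.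
Proof.
  intros Hr H12 Hy.
  pose proof (Qden_pos rho1 y Hr ltac:(lra)) as D1.
  pose proof (Qden_pos rho2 y ltac:(lra) ltac:(lra)) as D2.
  assert (E : Q rho1 y - Q rho2 y = y * (1 - y) * (rho2 - rho1) / ((rho1 * (1 - y) + y) * (rho2 * (1 - y) + y)))
    by (unfold Q; field; lra).
  assert (0 < y * (1 - y) * (rho2 - rho1) / ((rho1 * (1 - y) + y) * (rho2 * (1 - y) + y))).
  { apply Rdiv_lt_0_compat. apply Rmult_lt_0_compat; [apply Rmult_lt_0_compat|]; lra. nra. }
  lra.
Qed.

Lemma bmaxpow_Q (G : R -> R) (n : nat) x : (1 <= n)%nat -> 0 <= G x <= 1 ->
  bmaxpow n G x = Q (INR n) (G x).
Proof.
  intros Hn Hy. induction n as [|n IH]; [lia|].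
  destruct (Nat.eq_dec n 0) as [->|Hn0].
  - simpl. unfold bmaxconv, bmeet. destruct (Req_EM_T 1 0); [lra|].
    destruct (Req_EM_T (G x) 0) as [E|E].
    + rewrite E, Q0. reflexivity.
    + unfold Q. simpl. field. split; [lra|auto].
  - simpl bmaxpow. unfold bmaxconv. rewrite IH by lia.
    assert (HnR : 0 < INR n) by (apply lt_0_INR; lia).
    unfold bmeet. destruct (Req_EM_T (G x) 0) as [E|E].
    + rewrite E, Q0. destruct (Req_EM_T 0 0); [|lra]. rewrite Q0. reflexivity.
    + destruct (Req_EM_T (Q (INR n) (G x)) 0) as [E2|E2].
      { exfalso. pose proof (Q_pos (INR n) (G x) HnR ltac:(lra)). lra. }
      rewrite S_INR. pose proof (Qden_pos (INR n) (G x) HnR Hy).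
      pose proof (Qden_pos (INR n + 1) (G x) ltac:(lra) Hy).
      unfold Q. field. repeat split; try lra.
Qed.

Lemma cv_ext1 (u v : nat -> R) l : Un_cv u l -> (forall n, (1 <= n)%nat -> u n = v n) -> Un_cv v l.
Proof.
  intros H E eps Heps. destruct (H eps Heps) as [N HN]. exists (S N). intros n Hn.
  rewrite <- E by lia. apply HN. lia.
Qed.

Lemma cv_sub (u : nat -> R) (m : nat -> nat) l : Un_cv u l ->
  (forall N, exists N0, forall n, (n >= N0)%nat -> (m n >= N)%nat) -> Un_cv (fun n => u (m n)) l.
Proof.
  intros H Hm eps Heps. destruct (H eps Heps) as [N HN]. destruct (Hm N) as [N0 HN0].
  exists N0. intros n Hn. apply HN, HN0, Hn.
Qed.

Lemma cv_le_io (u v : nat -> R) l1 l2 : Un_cv u l1 -> Un_cv v l2 ->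
  (forall N, exists n, (n >= N)%nat /\ u n <= v n) -> l1 <= l2.
Proof.
  intros Hu Hv Hio. destruct (Rle_or_lt l1 l2) as [|Hlt]; auto. exfalso.
  destruct (Hu ((l1 - l2)/2) ltac:(lra)) as [N1 H1].
  destruct (Hv ((l1 - l2)/2) ltac:(lra)) as [N2 H2].
  destruct (Hio (max N1 N2)) as [n [Hn Huv]].
  specialize (H1 n ltac:(lia)). specialize (H2 n ltac:(lia)).
  unfold R_dist in *. apply Rabs_def2 in H1. apply Rabs_def2 in H2. lra.
Qed.

Lemma cv_lt_ev (u v : nat -> R) l1 l2 : Un_cv u l1 -> Un_cv v l2 -> l1 < l2 ->
  exists N, forall n, (n >= N)%nat -> u n < v n.
Proof.
  intros Hu Hv Hlt.
  destruct (Hu ((l2 - l1)/2) ltac:(lra)) as [N1 H1].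
  destruct (Hv ((l2 - l1)/2) ltac:(lra)) as [N2 H2].
  exists (max N1 N2). intros n Hn.
  specialize (H1 n ltac:(lia)). specialize (H2 n ltac:(lia)).
  unfold R_dist in *. apply Rabs_def2 in H1. apply Rabs_def2 in H2. lra.
Qed.

Lemma cv_Q (r y : nat -> R) rho y0 : Un_cv r rho -> 0 < rho -> Un_cv y y0 ->
  (forall n, 0 <= y n <= 1) -> 0 <= y0 <= 1 ->
  Un_cv (fun n => y n / (r n * (1 - y n) + y n)) (y0 / (rho * (1 - y0) + y0)).
Proof.
  intros Hr Hrho Hy Hyn Hy0.
  assert (D : 0 < rho * (1 - y0) + y0).
  { destruct (Rle_lt_or_eq_dec 0 y0 (proj1 Hy0)) as [H|H].
    - assert (0 <= rho * (1 - y0)) by (apply Rmult_le_pos; lra). lra.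
    - subst. lra. }
  assert (Hd : Un_cv (fun n => r n * (1 - y n) + y n) (rho * (1 - y0) + y0)).
  { apply CV_plus; auto. apply CV_mult; auto. apply CV_minus; auto.
    intros eps Heps. exists 0%nat. intros. unfold R_dist. rewrite Rminus_diag, Rabs_R0. auto. }
  assert (Hi : Un_cv (fun n => / (r n * (1 - y n) + y n)) (/ (rho * (1 - y0) + y0))).
  { apply (continuity_seq Rinv (fun n => r n * (1 - y n) + y n)); auto.
    apply (continuity_pt_inv (fun x => x)). apply derivable_continuous_pt, derivable_pt_id. lra. }
  unfold Rdiv. apply CV_mult; auto.
Qed.

Lemma cauchy_mono (L : R -> R) : (forall x y, L (x + y) = L x + L y) ->
  (forall x y, x <= y -> L x <= L y) -> forall x, L x = L 1 * x.
Proof.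
  intros Hadd Hmon.
  assert (L0 : L 0 = 0). { pose proof (Hadd 0 0) as H. rewrite Rplus_0_r in H. lra. }
  assert (Lneg : forall x, L (- x) = - L x).
  { intro x. pose proof (Hadd x (-x)) as H. rewrite Rplus_opp_r, L0 in H. lra. }
  assert (Lnat : forall n x, L (INR n * x) = INR n * L x).
  { induction n as [|n IH]; intro x.
    - simpl. rewrite Rmult_0_l, L0. ring.
    - rewrite S_INR. replace ((INR n + 1) * x) with (INR n * x + x) by ring.
      rewrite Hadd, IH. ring. }
  assert (Lint : forall z x, L (IZR z * x) = IZR z * L x).
  { intros z x. destruct (Z_le_gt_dec 0 z) as [Hz|Hz].
    - rewrite <- (Z2Nat.id z Hz), <- INR_IZR_INZ. apply Lnat.
    - assert (Hz' : (0 <= - z)%Z) by lia.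
      replace (IZR z) with (- INR (Z.to_nat (- z))).
      + rewrite Ropp_mult_distr_l_reverse, Lneg, Lnat. ring.
      + rewrite INR_IZR_INZ, Z2Nat.id by lia. rewrite opp_IZR. ring. }
  assert (Ldiv : forall z n, (1 <= n)%nat -> L (IZR z / INR n) = IZR z * L 1 / INR n).
  { intros z n Hn. assert (0 < INR n) by (apply lt_0_INR; lia).
    pose proof (Lnat n (IZR z / INR n)) as H1.
    replace (INR n * (IZR z / INR n)) with (IZR z * 1) in H1 by (field; lra).
    rewrite Lint in H1. apply (Rmult_eq_reg_l (INR n)); [|lra].
    rewrite <- H1. field. lra. }
  assert (L1pos : 0 <= L 1) by (rewrite <- L0; apply Hmon; lra).
  intro x.
  assert (Hb : forall n, (1 <= n)%nat -> Rabs (L x - L 1 * x) <= L 1 / INR n).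
  { intros n Hn. assert (Hn' : 0 < INR n) by (apply lt_0_INR; lia).
    set (z := up (INR n * x)). destruct (archimed (INR n * x)) as [A1 A2]. fold z in A1, A2.
    assert (X1 : x < IZR z / INR n).
    { apply (Rmult_lt_reg_l (INR n)); auto. field_simplify; lra. }
    assert (X2 : IZR (z - 1) / INR n <= x).
    { rewrite minus_IZR. apply (Rmult_le_reg_l (INR n)); auto. field_simplify; lra. }
    pose proof (Hmon _ _ (Rlt_le _ _ X1)) as M1. rewrite Ldiv in M1 by auto.
    pose proof (Hmon _ _ X2) as M2. rewrite Ldiv in M2 by auto. rewrite minus_IZR in M2.
    assert (K1 : L 1 * x <= IZR z * L 1 / INR n).
    { replace (IZR z * L 1 / INR n) with (L 1 * (IZR z / INR n)) by (field; lra).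
      apply Rmult_le_compat_l; lra. }
    assert (K2 : (IZR z - 1) * L 1 / INR n <= L 1 * x).
    { replace ((IZR z - 1) * L 1 / INR n) with (L 1 * (IZR (z - 1) / INR n))
        by (rewrite minus_IZR; field; lra).
      apply Rmult_le_compat_l; lra. }
    assert (E : IZR z * L 1 / INR n - (IZR z - 1) * L 1 / INR n = L 1 / INR n) by (field; lra).
    apply Rabs_le. lra. }
  destruct (Req_dec (L x - L 1 * x) 0) as [E|E]; [lra|].
  exfalso. assert (Hd : 0 < Rabs (L x - L 1 * x)) by (apply Rabs_pos_lt; auto).
  set (d := Rabs (L x - L 1 * x)) in *.
  destruct (archimed_cor1 (d / (L 1 + 1)) ltac:(apply Rdiv_lt_0_compat; lra)) as [N [HN1 HN2]].
  specialize (Hb N ltac:(lia)). fold d in Hb.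
  assert (0 < INR N) by (apply lt_0_INR; lia).
  assert (L 1 / INR N < d).
  { apply Rle_lt_trans with ((L 1 + 1) * / INR N).
    - unfold Rdiv. apply Rmult_le_compat_r; [left; apply Rinv_0_lt_compat; lra| lra].
    - apply (Rmult_lt_reg_l (/ (L 1 + 1))). apply Rinv_0_lt_compat; lra.
      rewrite <- Rmult_assoc, Rinv_l, Rmult_1_l by lra.
      unfold Rdiv in HN1. rewrite Rmult_comm. auto. }
  lra.
Qed.

Definition mseq (r : R) (n : nat) : nat := Z.to_nat (up (r * INR n)).

Lemma mseq_bounds r n : 0 < r -> r * INR n < INR (mseq r n) <= r * INR n + 1 /\ (1 <= mseq r n)%nat.
Proof.
  intros Hr. unfold mseq. destruct (archimed (r * INR n)) as [A1 A2].
  assert (0 <= r * INR n) by (apply Rmult_le_pos; [lra| apply pos_INR]).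
  assert (Hz : (0 < up (r * INR n))%Z) by (apply lt_IZR; lra).
  rewrite (INR_IZR_INZ (Z.to_nat _)), Z2Nat.id by lia. split; [lra|]. lia.
Qed.

Lemma mseq_inf r : 0 < r -> forall N, exists N0, forall n, (n >= N0)%nat -> (mseq r n >= N)%nat.
Proof.
  intros Hr N. destruct (archimed (INR N / r)) as [A1 _].
  assert (0 <= INR N / r) by (unfold Rdiv; apply Rmult_le_pos; [apply pos_INR|left; apply Rinv_0_lt_compat; lra]).
  assert (Hz : (0 < up (INR N / r))%Z) by (apply lt_IZR; lra).
  exists (Z.to_nat (up (INR N / r))). intros n Hn.
  apply le_INR in Hn. rewrite (INR_IZR_INZ (Z.to_nat _)), Z2Nat.id in Hn by lia.
  destruct (mseq_bounds r n Hr) as [[B1 _] _].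
  assert (INR N < INR (mseq r n)).
  { apply Rle_lt_trans with (r * INR n); auto.
    replace (INR N) with (r * (INR N / r)) by (field; lra).
    apply Rmult_le_compat_l; lra. }
  apply INR_lt in H0. lia.
Qed.

Lemma mseq_ratio r : 0 < r -> Un_cv (fun n => INR n / INR (mseq r n)) (/ r).
Proof.
  intros Hr eps Heps.
  destruct (archimed_cor1 (eps * (r * r)) ltac:(apply Rmult_lt_0_compat; nra)) as [N [HN1 HN2]].
  exists N. intros n Hn.
  assert (HnN : INR N <= INR n) by (apply le_INR; lia).
  assert (0 < INR N) by (apply lt_0_INR; lia).
  destruct (mseq_bounds r n Hr) as [[B1 B2] _].
  set (m := INR (mseq r n)) in *.
  assert (Hm : 0 < m) by nra.
  unfold R_dist.
  replace (INR n / m - / r) with ((INR n * r - m) / (r * m)) by (field; lra).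
  unfold Rdiv; rewrite Rabs_mult, Rabs_inv, (Rabs_right (r * m)) by nra. fold (Rabs (INR n * r - m) / (r * m)).
  apply Rle_lt_trans with (1 / (r * m)).
  - unfold Rdiv. apply Rmult_le_compat_r. left; apply Rinv_0_lt_compat; nra.
    apply Rabs_le. lra.
  - apply Rle_lt_trans with (/ (r * r * INR N)).
    + unfold Rdiv. rewrite Rmult_1_l. apply Rinv_le_contravar. apply Rmult_lt_0_compat; nra.
      replace (r * m) with (r * m) by ring. 
      assert (r * INR N <= m) by nra. nra.
    + rewrite Rinv_mult. apply (Rmult_lt_reg_l (r * r)). nra.
      rewrite <- Rmult_assoc, Rinv_r, Rmult_1_l by nra. nra.
Qed.

Lemma scale_exists (F G : R -> R) (a : nat -> R) :
  in_Delta_plus F -> in_Delta_plus G -> (forall n, 0 < a n) ->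
  (forall t, 0 <= t -> Un_cv (fun n => Q (INR n) (G (a n * t))) (F t)) ->
  F 0 = 0 -> forall t0, 0 <= t0 -> 0 < F t0 < 1 ->
  forall r, 0 < r -> exists c, 0 < c /\ forall t, 0 <= t -> F (c * t) = Q (/ r) (F t).
Proof.
  intros HF HG Ha S1 F0 t0 Ht0 Ft0 r Hr.
  destruct HF as [Fr [Fm [Frc Finf]]]. destruct HG as [Gr [Gm _]].
  assert (Ht0' : 0 < t0). { destruct (Rle_lt_or_eq_dec 0 t0 Ht0) as [|E]; auto. subst. lra. }
  set (H := fun n x => Q (INR n) (G x)).
  assert (Hmono : forall n x x', (1 <= n)%nat -> 0 <= x -> x <= x' -> H n x <= H n x').
  { intros n x x' Hn Hx Hxx'. unfold H. apply Q_mono.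
    apply lt_0_INR; lia. apply Gr; lra. apply Gm; lra. apply Gr; lra. }
  set (m := mseq r).
  assert (Hm1 : forall n, (1 <= m n)%nat) by (intro n; apply (mseq_bounds r n Hr)).
  assert (S2 : forall t, 0 <= t -> Un_cv (fun n => H n (a (m n) * t)) (Q (/ r) (F t))).
  { intros t Ht.
    assert (Hs : Un_cv (fun n => H (m n) (a (m n) * t)) (F t)).
    { apply (cv_sub (fun n => H n (a n * t)) m). apply S1; auto. apply mseq_inf; auto. }
    assert (Hyr : forall n, 0 <= H (m n) (a (m n) * t) <= 1).
    { intro n. unfold H. apply Q_range. apply lt_0_INR. specialize (Hm1 n). lia.
      apply Gr. apply Rmult_le_pos; [left; apply Ha| auto]. }
    pose proof (cv_Q _ _ _ _ (mseq_ratio r Hr) ltac:(apply Rinv_0_lt_compat; lra) Hs Hyr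
      ltac:(apply Fr; auto)) as K.
    apply (cv_ext1 _ _ _ K). intros n Hn. unfold H at 2. fold m.
    assert (0 < INR (m n)) by (apply lt_0_INR; specialize (Hm1 n); lia).
    assert (0 < INR n) by (apply lt_0_INR; lia).
    unfold H. fold (Q (INR n / INR (m n)) (Q (INR (m n)) (G (a (m n) * t)))).
    rewrite Q_comp. f_equal. field. lra.
    apply Rdiv_lt_0_compat; lra. auto.
    apply Gr. apply Rmult_le_pos; [left; apply Ha| auto]. }
  set (Fr0 := Q (/ r) (F t0)).
  assert (HFr0 : 0 < Fr0 < 1).
  { split. apply Q_pos. apply Rinv_0_lt_compat; lra. lra. apply Q_lt1. apply Rinv_0_lt_compat; lra. lra. }
  assert (HaM : forall n, 0 <= a n) by (intro; left; apply Ha).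
  destruct (Finf (1 - Fr0) ltac:(lra)) as [M0 HM0].
  set (Mc := (Rabs M0 + 1) / t0).
  assert (HMc : 0 < Mc) by (unfold Mc; apply Rdiv_lt_0_compat; [pose proof (Rabs_pos M0); lra| lra]).
  assert (HMct : Mc * t0 = Rabs M0 + 1) by (unfold Mc; field; lra).
  assert (FM : Fr0 < F (Mc * t0)).
  { assert (M0 <= Mc * t0) by (rewrite HMct; pose proof (Rle_abs M0); lra).
    specialize (HM0 (Mc * t0) H0).
    apply Rabs_def2 in HM0. lra. }
  assert (HMct0 : 0 <= Mc * t0) by (rewrite HMct; pose proof (Rabs_pos M0); lra).
  destruct (cv_lt_ev _ _ _ _ (S2 t0 Ht0) (S1 (Mc * t0) HMct0) FM) as [NU HNU].
  assert (Up : forall n, (n >= max NU 1)%nat -> a (m n) < Mc * a n).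
  { intros n Hn. specialize (HNU n ltac:(lia)). destruct (Rlt_or_le (a (m n)) (Mc * a n)) as [|K]; auto.
    exfalso. assert (H n (a n * (Mc * t0)) <= H n (a (m n) * t0)).
    { apply Hmono. lia. apply Rmult_le_pos; [auto| lra].
      replace (a n * (Mc * t0)) with ((Mc * a n) * t0) by ring. apply Rmult_le_compat_r; lra. }
    unfold H in *. lra. }
  destruct (Frc 0 ltac:(lra) Fr0 ltac:(lra)) as [d0 [Hd0 Hd0']].
  set (ep := d0 / (2 * t0)).
  assert (Hep : 0 < ep) by (unfold ep; apply Rdiv_lt_0_compat; lra).
  assert (Fep : F (ep * t0) < Fr0).
  { assert (E : ep * t0 = d0 / 2) by (unfold ep; field; lra).
    specialize (Hd0' (ep * t0) ltac:(rewrite E; lra)). rewrite F0 in Hd0'.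
    apply Rabs_def2 in Hd0'. lra. }
  destruct (cv_lt_ev _ _ _ _ (S1 (ep * t0) ltac:(apply Rmult_le_pos; lra)) (S2 t0 Ht0) Fep) as [NL HNL].
  assert (Lo : forall n, (n >= max NL 1)%nat -> ep * a n < a (m n)).
  { intros n Hn. specialize (HNL n ltac:(lia)). destruct (Rlt_or_le (ep * a n) (a (m n))) as [|K]; auto.
    exfalso. assert (H n (a (m n) * t0) <= H n (a n * (ep * t0))).
    { apply Hmono. lia. apply Rmult_le_pos; [auto| lra].
      replace (a n * (ep * t0)) with ((ep * a n) * t0) by ring. apply Rmult_le_compat_r; lra. }
    unfold H in *. lra. }
  set (E := fun y => forall N, exists n, (n >= N)%nat /\ y * a n < a (m n)).
  assert (Ebd : bound E).
  { exists Mc. intros y Ey. destruct (Ey (max NU 1)) as [n [Hn Hy]].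
    specialize (Up n Hn). specialize (Ha n). 
    destruct (Rle_or_lt y Mc) as [|K]; auto. exfalso. 
    assert (Mc * a n < y * a n) by (apply Rmult_lt_compat_r; lra). lra. }
  assert (Eep : E ep).
  { intro N. exists (max N (max NL 1)). split. lia. apply Lo. lia. }
  destruct (completeness E Ebd (ex_intro _ ep Eep)) as [c [cub club]].
  assert (Hc : ep <= c) by (apply cub; auto).
  assert (I1 : forall c', c < c' -> exists N, forall n, (n >= N)%nat -> a (m n) <= c' * a n).
  { intros c' Hc'. apply NNPP. intro K.
    assert (E c').
    { intro N. apply NNPP. intro K2. apply K. exists N. intros n Hn.
      destruct (Rle_or_lt (a (m n)) (c' * a n)) as [|K3]; auto. exfalso. apply K2. exists n. auto. }
    specialize (cub c' H0). lra. }
  assert (I2 : forall c', c' < c -> forall N, exists n, (n >= N)%nat /\ c' * a n < a (m n)).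
  { intros c' Hc' N. apply NNPP. intro K.
    assert (is_upper_bound E c').
    { intros y Ey. destruct (Rle_or_lt y c') as [|K2]; auto. exfalso.
      destruct (Ey N) as [n [Hn Hy]]. apply K. exists n. split; [exact Hn|].
      apply Rlt_trans with (y * a n); [|exact Hy]. apply Rmult_lt_compat_r; [apply Ha|lra]. }
    specialize (club c' H0). lra. }
  assert (Hcpos : 0 < c) by lra.
  assert (In1 : forall c' t, c < c' -> 0 <= t -> Q (/ r) (F t) <= F (c' * t)).
  { intros c' t Hc' Ht. destruct (I1 c' Hc') as [N HN].
    apply (cv_le_io _ _ _ _ (S2 t Ht) (S1 (c' * t) ltac:(apply Rmult_le_pos; lra))).
    intro N'. exists (max N' (max N 1)). split; [lia|].
    set (n := max N' (max N 1)). specialize (HN n ltac:(lia)).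
    change (H n (a (m n) * t) <= H n (a n * (c' * t))).
    apply Hmono. lia. apply Rmult_le_pos; auto.
    replace (a n * (c' * t)) with ((c' * a n) * t) by ring. apply Rmult_le_compat_r; lra. }
  assert (In2 : forall c' t, 0 < c' -> c' < c -> 0 <= t -> F (c' * t) <= Q (/ r) (F t)).
  { intros c' t Hc'0 Hc' Ht.
    apply (cv_le_io _ _ _ _ (S1 (c' * t) ltac:(apply Rmult_le_pos; lra)) (S2 t Ht)).
    intro N'. destruct (I2 c' Hc' (max N' 1)) as [n [Hn Hn']]. exists n. split; [lia|].
    change (H n (a n * (c' * t)) <= H n (a (m n) * t)).
    apply Hmono. lia. apply Rmult_le_pos; [auto| apply Rmult_le_pos; lra].
    replace (a n * (c' * t)) with ((c' * a n) * t) by ring. apply Rmult_le_compat_r; lra. }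
  exists c. split; auto. intros t Ht.
  destruct (Rle_lt_or_eq_dec 0 t Ht) as [Htp|Ht0e].
  2:{ subst t. rewrite Rmult_0_r, F0, Q0. reflexivity. }
  assert (Hct : 0 <= c * t) by (apply Rmult_le_pos; lra).
  apply Rle_antisym.
  -
    set (y := F (c * t)). assert (Hy : 0 <= y <= 1) by (apply Fr; auto).
    assert (K : Q r y <= F t).
    { destruct (Rle_or_lt (Q r y) (F t)) as [|K]; auto. exfalso.
      destruct (Frc t Ht (Q r y - F t) ltac:(lra)) as [d [Hd Hd']].
      set (t' := t + d / 2).
      assert (Ht' : 0 < t') by (unfold t'; lra).
      set (c' := c * t / t').
      assert (Hc'0 : 0 < c') by (unfold c'; apply Rdiv_lt_0_compat; nra).
      assert (Hc'1 : c' < c).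
      { unfold c'. apply (Rmult_lt_reg_r t'); auto. unfold Rdiv.
        rewrite Rmult_assoc, Rinv_l, Rmult_1_r by lra. unfold t'. nra. }
      pose proof (In2 c' t' Hc'0 Hc'1 ltac:(lra)) as K2.
      replace (c' * t') with (c * t) in K2 by (unfold c'; field; lra). fold y in K2.
      assert (K3 : Q r y <= Q r (Q (/ r) (F t'))).
      { apply Q_mono; auto. lra. apply Q_range. apply Rinv_0_lt_compat; lra. apply Fr; lra. }
      rewrite Q_comp, Rinv_r, Q1 in K3 by (try apply Fr; try apply Rinv_0_lt_compat; lra).
      specialize (Hd' t' ltac:(unfold t'; lra)). apply Rabs_def2 in Hd'. lra. }
    assert (K4 : Q (/ r) (Q r y) <= Q (/ r) (F t)).
    { apply Q_mono. apply Rinv_0_lt_compat; lra. apply Q_range; auto. auto. apply Fr; auto. }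
    rewrite Q_comp, Rinv_l, Q1 in K4 by (try apply Rinv_0_lt_compat; lra).
    exact K4.
  -
    destruct (Rle_or_lt (Q (/ r) (F t)) (F (c * t))) as [|K]; auto. exfalso.
    destruct (Frc (c * t) Hct (Q (/ r) (F t) - F (c * t)) ltac:(lra)) as [d [Hd Hd']].
    set (c' := c + d / (2 * t)).
    assert (Hc' : c < c') by (unfold c'; assert (0 < d / (2 * t)) by (apply Rdiv_lt_0_compat; lra); lra).
    pose proof (In1 c' t Hc' Ht) as K2.
    assert (E1 : c' * t = c * t + d / 2) by (unfold c'; field; lra).
    specialize (Hd' (c' * t) ltac:(rewrite E1; lra)). apply Rabs_def2 in Hd'. lra.
Qed.

Lemma cv_const (x : R) : Un_cv (fun _ => x) x.
Proof. intros eps Heps. exists 0%nat. intros. unfold R_dist. rewrite Rminus_diag, Rabs_R0. auto. Qed.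

Lemma reverse_dir (F : R -> R) lambda alpha : in_Delta_plus F -> 0 < lambda -> 0 < alpha -> F 0 = 0 ->
  (forall t, 0 < t -> F t = / (1 + lambda * Rpower t (- alpha))) -> boolean_max_stable F.
Proof.
  intros HF Hl Ha F0 Hform.
  exists F, (fun n => match n with O => 1 | _ => exp (/ alpha * ln (INR n)) end).
  split; auto. split.
  { intros [|n]; [lra| apply exp_pos]. }
  intros t Ht. apply (cv_ext1 (fun _ => F t)); [apply cv_const|].
  intros n Hn. destruct n as [|n']; [lia|]. set (n := S n') in *.
  assert (HnR : 0 < INR n) by (apply lt_0_INR; lia).
  assert (Han : 0 < exp (/ alpha * ln (INR n))) by apply exp_pos.
  rewrite bmaxpow_Q by (auto; apply (proj1 HF); apply Rmult_le_pos; lra).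
  destruct (Rle_lt_or_eq_dec 0 t Ht) as [Htp|E].
  2:{ subst t. rewrite Rmult_0_r, F0, Q0. reflexivity. }
  rewrite !Hform by (try apply Rmult_lt_0_compat; lra).
  unfold Rpower. rewrite ln_mult by lra. rewrite ln_exp.
  replace (- alpha * (/ alpha * ln (INR n) + ln t)) with (- ln (INR n) + - alpha * ln t) by (field; lra).
  rewrite exp_plus, exp_Ropp, exp_ln by lra.
  assert (0 < exp (- alpha * ln t)) by apply exp_pos.
  set (w := exp (- alpha * ln t)) in *.
  unfold Q. field. assert (0 < lambda * w) by nra.
  repeat split; try lra. replace (INR n * (INR n + lambda * w - INR n) + INR n) with (INR n * (lambda * w + 1)) by ring.
  nra.
Qed.

Lemma F0_lemma (F G : R -> R) (a : nat -> R) : in_Delta_plus F -> ~ degenerate F -> in_Delta_plus G ->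
  (forall n, 0 < a n) ->
  (forall t, 0 <= t -> Un_cv (fun n => Q (INR n) (G (a n * t))) (F t)) -> F 0 = 0.
Proof.
  intros HF Hnd HG Ha S1. destruct HG as [Gr [Gm _]].
  pose proof (S1 0 ltac:(lra)) as K. 
  assert (E : forall n, a n * 0 = 0) by (intro; ring).
  assert (K' : Un_cv (fun n => Q (INR n) (G 0)) (F 0)).
  { intros eps Heps. destruct (K eps Heps) as [N HN]. exists N. intros n Hn. replace (G 0) with (G (a n * 0)) by (rewrite E; reflexivity). auto. }
  destruct (Gr 0 ltac:(lra)) as [g0 g1]. destruct (Rle_lt_or_eq_dec _ _ g1) as [Hlt|Heq].
  - apply (UL_sequence _ _ _ K'). intros eps Heps.
    destruct (archimed_cor1 (eps * (1 - G 0)) ltac:(apply Rmult_lt_0_compat; lra)) as [N [HN1 HN2]].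
    exists N. intros n Hn. assert (HnN : INR N <= INR n) by (apply le_INR; lia).
    assert (0 < INR N) by (apply lt_0_INR; lia).
    unfold R_dist. rewrite Rminus_0_r. 
    pose proof (Q_range (INR n) (G 0) ltac:(lra) ltac:(lra)) as [Q0' Q1'].
    rewrite Rabs_right by lra. unfold Q.
    assert (D : INR N * (1 - G 0) <= INR n * (1 - G 0) + G 0) by nra.
    assert (0 < INR N * (1 - G 0)) by nra.
    apply Rle_lt_trans with (1 / (INR N * (1 - G 0))).
    + unfold Rdiv. apply Rle_trans with (1 * / (INR n * (1 - G 0) + G 0)).
      apply Rmult_le_compat_r. left; apply Rinv_0_lt_compat; lra. lra.
      apply Rmult_le_compat_l. lra. apply Rinv_le_contravar; lra.
    + unfold Rdiv. rewrite Rmult_1_l, Rinv_mult.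
      apply (Rmult_lt_reg_l (1 - G 0)). lra.
      replace ((1 - G 0) * (/ INR N * / (1 - G 0))) with (/ INR N) by (field; lra).
      nra.
  - exfalso. apply Hnd. exists 0. split; [lra|]. intros t Ht.
    destruct (Rlt_dec t 0) as [Hlt0|Hge0]; [lra|].
    assert (Gt : forall s, 0 <= s -> G s = 1).
    { intros s Hs. pose proof (Gm 0 s ltac:(lra) Hs). pose proof (Gr s Hs). lra. }
    apply (UL_sequence _ _ _ (S1 t Ht)).
    apply (cv_ext1 (fun _ => 1)); [apply cv_const|]. intros n Hn.
    rewrite Gt by (apply Rmult_le_pos; [left; apply Ha|lra]).
    unfold Q. assert (0 < INR n) by (apply lt_0_INR; lia). field.
Qed.

Lemma t0_exists (F : R -> R) : in_Delta_plus F -> ~ degenerate F -> F 0 = 0 ->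
  exists t0, 0 <= t0 /\ 0 < F t0 < 1.
Proof.
  intros HF Hnd F0. destruct HF as [Fr [Fm [Frc Finf]]].
  apply NNPP. intro K.
  assert (K01 : forall t, 0 <= t -> F t = 0 \/ F t = 1).
  { intros t Ht. destruct (Fr t Ht) as [A B].
    destruct (Rle_lt_or_eq_dec _ _ A) as [A'|A']; [|auto].
    destruct (Rle_lt_or_eq_dec _ _ B) as [B'|B']; [|auto].
    exfalso. apply K. exists t. auto. }
  set (E := fun t => 0 <= t /\ F t = 0).
  destruct (Finf (1/2) ltac:(lra)) as [M HM].
  assert (Ebd : bound E).
  { exists M. intros t [Ht Et]. destruct (Rle_or_lt t M) as [|L]; auto.
    specialize (HM t ltac:(lra)). rewrite Et in HM. apply Rabs_def2 in HM. lra. }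
  destruct (completeness E Ebd (ex_intro _ 0 (conj (Rle_refl 0) F0))) as [c [cub club]].
  assert (Hc : 0 <= c) by (apply cub; split; [lra|auto]).
  apply Hnd. exists c. split; auto. intros t Ht.
  destruct (Rlt_dec t c) as [L|L].
  - destruct (classic (exists e, E e /\ t < e)) as [[e [[He Fe] Lte]]|N].
    + pose proof (Fm t e Ht ltac:(lra)). pose proof (Fr t Ht). lra.
    + exfalso. assert (is_upper_bound E t).
      { intros x Ex. destruct (Rle_or_lt x t); auto. exfalso. apply N. exists x. auto. }
      specialize (club t H). lra.
  - destruct (K01 t Ht) as [Z|O]; auto. exfalso.
    assert (t <= c) by (apply cub; split; auto). assert (t = c) by lra. subst t.
    destruct (Frc c Hc (1/2) ltac:(lra)) as [d [Hd Hd']].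
    assert (Fs : F (c + d/2) = 0 \/ F (c + d/2) = 1) by (apply K01; lra).
    destruct Fs as [Fs|Fs].
    + assert (c + d/2 <= c) by (apply cub; split; [lra|auto]). lra.
    + specialize (Hd' (c + d/2) ltac:(lra)). rewrite Fs, Z in Hd'. apply Rabs_def2 in Hd'. lra.
Qed.

Lemma no_period (F : R -> R) t0 rho : in_Delta_plus F -> 0 < t0 -> 0 < F t0 < 1 -> 1 < rho ->
  (forall s, 0 <= s -> F (rho * s) = F s) -> False.
Proof.
  intros HF Ht0 Ft0 Hr Hp. destruct HF as [Fr [Fm [Frc Finf]]].
  assert (Fpow : forall k, F (rho ^ k * t0) = F t0).
  { induction k as [|k IH]. simpl. rewrite Rmult_1_l. auto.
    simpl. rewrite Rmult_assoc, Hp. auto. apply Rmult_le_pos; [apply pow_le; lra|lra]. }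
  destruct (Finf (1 - F t0) ltac:(lra)) as [M HM].
  destruct (Pow_x_infinity rho ltac:(rewrite Rabs_right; lra) ((Rabs M + 1) / t0)) as [N HN].
  specialize (HN N (le_n N)). rewrite Rabs_right in HN by (apply Rle_ge, pow_le; lra).
  assert (K : Rabs M + 1 <= rho ^ N * t0).
  { replace (Rabs M + 1) with ((Rabs M + 1) / t0 * t0) by (field; lra).
    apply Rmult_le_compat_r; lra. }
  specialize (HM (rho ^ N * t0) ltac:(pose proof (Rle_abs M); lra)).
  rewrite Fpow in HM. apply Rabs_def2 in HM. lra.
Qed.

Lemma forward_dir (F : R -> R) : in_Delta_plus F -> ~ degenerate F -> boolean_max_stable F ->
   exists lambda alpha : R, 0 < lambda /\ 0 < alpha /\ F 0 = 0 /\
     forall t, 0 < t -> F t = / (1 + lambda * Rpower t (- alpha)).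
Proof.
  intros HF Hnd [G [a [HG [Ha Hcv]]]].
  assert (S1 : forall t, 0 <= t -> Un_cv (fun n => Q (INR n) (G (a n * t))) (F t)).
  { intros t Ht. apply (cv_ext1 _ _ _ (Hcv t Ht)). intros n Hn. apply bmaxpow_Q; auto.
    apply (proj1 HG). apply Rmult_le_pos; [left; apply Ha|auto]. }
  pose proof (F0_lemma F G a HF Hnd HG Ha S1) as F0.
  destruct (t0_exists F HF Hnd F0) as [t0 [Ht0 Ft0]].
  assert (Ht0' : 0 < t0). { destruct (Rle_lt_or_eq_dec 0 t0 Ht0) as [|E]; auto. subst. lra. }
  pose proof HF as [Fr [Fm [Frc Finf]]].
  set (P := fun r c => 0 < c /\ forall t, 0 <= t -> F (c * t) = Q (/ r) (F t)).
  assert (Hex : forall r, 0 < r -> exists c, P r c).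
  { intros r Hr. apply (scale_exists F G a HF HG Ha S1 F0 t0 Ht0 Ft0 r Hr). }
  assert (Hlt : forall r c1 c2, 0 < r -> P r c1 -> P r c2 -> c1 < c2 -> False).
  { intros r c1 c2 Hr [Hc1 E1] [Hc2 E2] L.
    apply (no_period F t0 (c2 / c1) HF Ht0' Ft0).
    { apply (Rmult_lt_reg_r c1); auto. unfold Rdiv. rewrite Rmult_assoc, Rinv_l; lra. }
    intros s Hs.
    replace (c2 / c1 * s) with (c2 * (s / c1)) by (field; lra).
    assert (0 <= s / c1) by (apply Rmult_le_pos; [lra| left; apply Rinv_0_lt_compat; lra]).
    rewrite E2, <- E1 by auto. f_equal. field. lra. }
  assert (Huniq : forall r c1 c2, 0 < r -> P r c1 -> P r c2 -> c1 = c2).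
  { intros r c1 c2 Hr H1 H2. destruct (Rtotal_order c1 c2) as [L|[L|L]]; auto; exfalso.
    apply (Hlt r c1 c2); auto. apply (Hlt r c2 c1); auto. }
  assert (Hmul : forall r s c1 c2, 0 < r -> 0 < s -> P r c1 -> P s c2 -> P (r * s) (c1 * c2)).
  { intros r s c1 c2 Hr Hs [Hc1 E1] [Hc2 E2]. split. nra. intros t Ht.
    rewrite Rmult_assoc, E1, E2 by (auto; apply Rmult_le_pos; lra).
    rewrite Q_comp, Rinv_mult; auto; try (apply Rinv_0_lt_compat; lra). }
  assert (Hmon : forall r s c1 c2, 0 < r -> r < s -> P r c1 -> P s c2 -> c1 < c2).
  { intros r s c1 c2 Hr Hrs [Hc1 E1] [Hc2 E2].
    destruct (Rlt_or_le c1 c2) as [|L]; auto. exfalso.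
    pose proof (Q_anti (/ s) (/ r) (F t0) ltac:(apply Rinv_0_lt_compat; lra)
      ltac:(apply Rinv_lt_contravar; nra) Ft0) as K.
    rewrite <- E1, <- E2 in K by lra.
    pose proof (Fm (c2 * t0) (c1 * t0) ltac:(nra) ltac:(nra)). lra. }
  assert (P1 : P 1 1).
  { split. lra. intros t Ht. rewrite Rinv_1, Q1, Rmult_1_l; auto. }
  assert (Hc : forall r, exists c, 0 < r -> P r c).
  { intro r. destruct (Rlt_or_le 0 r) as [Hr|Hr].
    - destruct (Hex r Hr) as [c Pc]. exists c. auto.
    - exists 1. intro. lra. }
  set (cf := fun r => proj1_sig (constructive_indefinite_description _ (Hc r))).
  assert (Pcf : forall r, 0 < r -> P r (cf r)).
  { intros r Hr. unfold cf. destruct (constructive_indefinite_description _ (Hc r)) as [c Pc]. simpl. auto. }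
  assert (cfpos : forall x, 0 < cf (exp x)) by (intro x; apply (Pcf _ (exp_pos x))).
  set (L := fun x => ln (cf (exp x))).
  assert (Ladd : forall x y, L (x + y) = L x + L y).
  { intros x y. unfold L. rewrite <- ln_mult by auto. f_equal.
    apply (Huniq (exp (x + y))). apply exp_pos. apply Pcf, exp_pos.
    rewrite exp_plus. apply Hmul; try apply exp_pos; apply Pcf, exp_pos. }
  assert (Lmon : forall x y, x <= y -> L x <= L y).
  { intros x y Hxy. destruct (Rle_lt_or_eq_dec _ _ Hxy) as [Lt|Eq]; [|subst; lra].
    left. unfold L. apply ln_increasing; auto.
    apply (Hmon (exp x) (exp y)). apply exp_pos. apply exp_increasing; auto.
    apply Pcf, exp_pos. apply Pcf, exp_pos. }
  pose proof (cauchy_mono L Ladd Lmon) as Llin.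
  set (beta := L 1) in *.
  assert (cf1 : cf (exp 0) = 1).
  { rewrite exp_0. apply (Huniq 1); auto. lra. apply Pcf. lra. }
  assert (Hbeta : 0 < beta).
  { assert (K : cf (exp 0) < cf (exp 1)).
    { apply (Hmon (exp 0) (exp 1)). apply exp_pos. apply exp_increasing; lra.
      apply Pcf, exp_pos. apply Pcf, exp_pos. }
    rewrite cf1 in K. unfold beta, L. rewrite <- ln_1. apply ln_increasing; lra. }
  assert (Hcf : forall x, cf (exp x) = exp (beta * x)).
  { intro x. rewrite <- Llin. unfold L. rewrite exp_ln; auto. }
  set (alpha := / beta). set (y0 := F t0). set (u0 := / y0 - 1).
  assert (Hu0 : 0 < u0).
  { unfold u0. assert (1 < / y0). { rewrite <- Rinv_1. apply Rinv_lt_contravar; unfold y0; lra. } lra. }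
  exists (u0 * exp (alpha * ln t0)), alpha.
  split. { apply Rmult_lt_0_compat; auto. apply exp_pos. }
  split. { unfold alpha. apply Rinv_0_lt_compat; auto. }
  split; auto.
  intros t Ht.
  set (x := alpha * (ln t - ln t0)).
  destruct (Pcf (exp x) (exp_pos x)) as [_ Ex].
  specialize (Ex t0 Ht0). rewrite Hcf in Ex.
  replace (beta * x) with (ln t - ln t0) in Ex by (unfold x, alpha; field; lra).
  unfold Rminus in Ex. rewrite exp_plus, exp_Ropp, !exp_ln in Ex by auto.
  replace (t * / t0 * t0) with t in Ex by (field; lra).
  rewrite Ex. fold y0.
  assert (K : u0 * exp (alpha * ln t0) * Rpower t (- alpha) = u0 * / exp x).
  { unfold Rpower. rewrite Rmult_assoc, <- exp_plus, <- exp_Ropp. f_equal. f_equal.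
    unfold x. ring. }
  rewrite K. unfold Q, u0.
  assert (0 < exp x) by apply exp_pos.
  assert (0 < y0 < 1) by (unfold y0; lra).
  field. split; [lra|]. split; [lra|]. nra.
Qed.

Theorem corollary4p1 (F : R -> R) :
  in_Delta_plus F -> ~ degenerate F ->
  (boolean_max_stable F <->
   exists lambda alpha : R, 0 < lambda /\ 0 < alpha /\ F 0 = 0 /\
     forall t, 0 < t -> F t = / (1 + lambda * Rpower t (- alpha))).
Proof.
  intros HF Hnd. split.
  - apply forward_dir; auto.
  - intros [lambda [alpha [Hl [Ha [F0 Hf]]]]]. apply (reverse_dir F lambda alpha); auto.
Qed.
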